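(* Let $T$ be a permutation tableau, and let $i\neq j$ be two labels of $T$, each of which labels a dot (i.e. each is either a column label or the label of a restricted row). Then $i$ lies to the left of $j$ in $\xi(T)$ if and only if either $P_i<P_j$, or $P_j$ is contained in $P_i$.
   Context: Permutation tableaux. Draw a Ferrers diagram in English convention: rows are left-justified, row lengths weakly decrease from top to bottom, and every column is nonempty. Rows of length zero are allowed. A permutation tableau $T$ is a filling of the cells of such a diagram with 0's and 1's satisfying two conditions: (i) every column contains at least one 1; (ii) no cell containing 0 has both a 1 above it in its column and a 1 to its left in its row. Its length $n$ is the number of rows plus the number of columns. Labels. The southeast boundary path of $n$ unit south/west steps, from the top-right corner to the bottom-left corner, has its steps labeled $1,\ldots,n$ in order. Each row gets the label of its south step, and each column the label of its west step. $(i,j)$ denotes the cell in row $i$ and column $j$. Zeros, ones and rows. A 1 is topmost if there is no 1 above it in its column. A 0 is restricted if there is a 1 above it in its column. A rightmost restricted 0 is a restricted 0 with no restricted 0 to its right in its row. A row is unrestricted if it contains no restricted 0; empty rows are unrestricted. Dots. Black dots are placed on the topmost 1's (one per column), each labeled by its column label. White dots are placed on the rightmost restricted 0's (one per restricted row), each labeled by its row label. Alternating paths. An alternating path is a sequence of dots, identified with the sequence of their labels, built as follows. - From a white dot in cell $(i,j)$, the next dot is the black dot of column $j$. - From a black dot in cell $(i,j)$: if row $i$ is unrestricted, the path ends; otherwise the next dot is the white dot of row $i$. For a label $k$ of a dot, $P_k$ is the alternating path starting at that dot. $P_k$ is contained in a path $P$ if $k$ is the label of a dot of $P$; then $P_k$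 is a final segment of $P$. Order on paths. Let $P_a,P_b$ be two such paths, neither contained in the other. Remove their longest common final segment (nothing is removed if they share no dot), obtaining nonempty paths $P'_a,P'_b$. Define $P_a>P_b$ if the last dot of $P'_a$ lies in a row strictly below the last dot of $P'_b$, or in the same row and strictly to its right. Otherwise $P_a<P_b$. The bijection $\xi$. Start with the labels of the unrestricted rows in increasing order. Then process the column labels in decreasing order. For a column $j$: 1. If its black dot is in cell $(i,j)$, insert $j$ immediately to the left of $i$. 2. If column $j$ has white dots in rows $i_1<\cdots<i_k$, insert $i_1\cdots i_k$, in increasing order, immediately to the left of $j$. The result is the permutation $\xi(T)$ of $[n]$. *)

(* Defs.v *)
From mathcomp Require Import all_boot.
Set Implicit Arguments.
Unset Strict Implicit.
Unset Printing Implicit Defensive.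

(* A (candidate) permutation tableau of length [tn], encoded by its
   southeast boundary path.  Labels are the naturals 1..tn; step k of the
   boundary path is a south step (a row, labelled k) iff [tisrow k], and a
   west step (a column, labelled k) otherwise.  [tfill i j] is the entry of
   cell (i,j) (true = 1, false = 0); it is only meaningful on cells.
   With the English convention, row i contains column j iff i < j
   (the south step of row i comes before the west step of column j).
   Row i' is above row i iff i' < i; column j' is to the left of column j
   iff j' > j. *)
Record ptab := PTab { tn : nat; tisrow : nat -> bool; tfill : nat -> nat -> bool }.

Section Tab.
Variable T : ptab.

Definition labels := iota 1 (tn T).
Definition is_label (k : nat) := (1 <= k <= tn T).
Definition is_row (i : nat) := is_label i && tisrow T i.
Definition is_col (j : nat) := is_label j && ~~ tisrow T j.
Definition is_cell (i j : nat) := [&& is_row i, is_col j & i < j].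
Definition one (i j : nat) := is_cell i j && tfill T i j.
Definition zero (i j : nat) := is_cell i j && ~~ tfill T i j.

(* Validity: Ferrers diagram with every column nonempty (equivalently, the
   first boundary step is a south step when n > 0), every column contains a
   1, and the "Le" condition (ii). *)
Definition valid_ptab : Prop :=
  [/\ 0 < tn T -> tisrow T 1,
      forall j, is_col j -> exists i, one i j &
      forall i j, zero i j ->
        ~ ((exists i', i' < i /\ one i' j) /\ (exists j', j < j' /\ one i j'))].

Definition rzero (i j : nat) := zero i j && has (fun i' => (i' < i) && one i' j) labels.
Definition restricted_row (i : nat) := is_row i && has (rzero i) labels.
Definition unrestricted_row (i : nat) := is_row i && ~~ has (rzero i) labels.

(* black dot of column j: the topmost 1 of column j, in row [black_row j] *)
Definition black_row (j : nat) := head 0 [seq i <- labels | one i j].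
(* white dot of row i: the rightmost restricted 0 of row i, in column [white_col i] *)
Definition white_col (i : nat) := head 0 [seq j <- labels | rzero i j].

Definition is_dot_label (k : nat) := is_col k || restricted_row k.

Definition dot_cell (k : nat) : nat * nat :=
  if is_col k then (black_row k, k) else (k, white_col k).

Definition next_dot (k : nat) : option nat :=
  if is_col k then
    (if restricted_row (black_row k) then Some (black_row k) else None)
  else Some (white_col k).

Fixpoint apath_aux (fuel k : nat) : seq nat :=
  k :: match fuel with
       | 0 => [::]
       | fuel'.+1 => match next_dot k with
                     | Some k' => apath_aux fuel' k'
                     | None => [::]
                     end
       end.

(* P_k, as the sequence of labels of its dots.  An alternating path visits
   pairwise distinct dots, hence has at most n dots, so fuel n suffices. *)
Definition apath (k : nat) : seq nat := apath_aux (tn T) k.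

Definition contained (Pk P : seq nat) := head 0 Pk \in P.

Fixpoint strip_common (s t : seq nat) : seq nat * seq nat :=
  match s, t with
  | x :: s', y :: t' => if x == y then strip_common s' t' else (s, t)
  | _, _ => (s, t)
  end.

Definition path_gt (Pa Pb : seq nat) : bool :=
  let st := strip_common (rev Pa) (rev Pb) in
  let ca := dot_cell (head 0 st.1) in
  let cb := dot_cell (head 0 st.2) in
  (cb.1 < ca.1) || ((ca.1 == cb.1) && (ca.2 < cb.2)).

Definition path_lt (Pa Pb : seq nat) : bool :=
  [&& ~~ contained Pa Pb, ~~ contained Pb Pa & ~~ path_gt Pa Pb].

Definition insert_before (xs : seq nat) (y : nat) (s : seq nat) : seq nat :=
  take (index y s) s ++ xs ++ drop (index y s) s.

Definition xi_step (s : seq nat) (j : nat) : seq nat :=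
  let s1 := insert_before [:: j] (black_row j) s in
  insert_before [seq i <- labels | restricted_row i && (white_col i == j)] j s1.

Definition xi : seq nat :=
  foldl xi_step [seq i <- labels | unrestricted_row i]
        (rev [seq j <- labels | is_col j]).

End Tab.

(* Main.v *)
Require Import Defs.
From mathcomp Require Import all_boot.
Set Implicit Arguments. Unset Strict Implicit. Unset Printing Implicit Defensive.

Definition seqR (slt : rel nat) (u v : seq nat) : bool :=
  match strip_common u v with
  | (a :: _, b :: _) => slt a b
  | (a :: _, [::]) => true
  | _ => false
  end.

Lemma strip_cat w u v : strip_common (w ++ u) (w ++ v) = strip_common u v.
Proof. by elim: w => //= a w IH; rewrite eqxx. Qed.

Lemma seqR_cat slt w u v : seqR slt (w ++ u) (w ++ v) = seqR slt u v.
Proof. by rewrite /seqR strip_cat. Qed.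

Lemma seqR_rcons slt w u j : ~~ prefix w u -> seqR slt u (rcons w j) = seqR slt u w.
Proof.
elim: w u => [|b w IH] [|c u] //.
rewrite prefix_cons rcons_cons /seqR /=; case: ifP => [/eqP E|ne] //.
subst c; rewrite eqxx /= => H; exact: (IH u H).
Qed.

Lemma seqR_anti slt (tot : forall a b, a != b -> slt a b = ~~ slt b a) u v :
  u != v -> seqR slt u v = ~~ seqR slt v u.
Proof.
elim: u v => [|a u IH] [|b v] //= H.
rewrite /seqR /=; case: eqP => [ab|/eqP ab]; rewrite eq_sym.
  subst; rewrite eqxx; apply: IH; apply: contra H => /eqP ->; by [].
by rewrite (negPf ab) tot.
Qed.

Lemma strip_spec u v : exists w u' v', [/\ u = w ++ u', v = w ++ v',
   strip_common u v = (u', v') &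
   match u', v' with a :: _, b :: _ => a != b | _, _ => True end].
Proof.
elim: u v => [|a u IH] [|b v].
- by exists [::], [::], [::].
- by exists [::], [::], (b :: v).
- by exists [::], (a :: u), [::].
- rewrite /=; case: eqP => [<-|/eqP ne].
    have [w [u' [v' [-> -> E H]]]] := IH v.
    by exists (a :: w), u', v'.
  by exists [::], (a :: u), (b :: v).
Qed.

Section Abs.
Variables (par : nat -> nat) (anc : nat -> seq nat) (slt : rel nat).
Hypothesis anc0 : anc 0 = [::].
Hypothesis ancS : forall x, x != 0 -> anc x = x :: anc (par x).
Hypothesis slt_tot : forall a b, a != b -> slt a b = ~~ slt b a.

Lemma anc_inj x y : anc x = anc y -> x = y.
Proof.
case: (eqVneq x 0) => [->|nx]; case: (eqVneq y 0) => [->|ny] //.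
- by rewrite anc0 (ancS ny).
- by rewrite anc0 (ancS nx).
by rewrite (ancS nx) (ancS ny) => -[].
Qed.

Lemma rev_anc x : x != 0 -> rev (anc x) = rcons (rev (anc (par x))) x.
Proof. by move=> nx; rewrite (ancS nx) rev_cons. Qed.

Lemma prefix_split t : forall x w a, rev (anc x) = w ++ a :: t -> anc a = a :: rev w.
Proof.
elim/last_ind: t => [|t y IH] x w a E.
- have nx : x != 0 by apply/eqP => x0; move: E; rewrite x0 anc0; case: w.
  move: E; rewrite (rev_anc nx) cats1 => /rcons_inj [E Ex].
  by rewrite -Ex (ancS nx) -E revK.
- have nx : x != 0 by apply/eqP => x0; move: E; rewrite x0 anc0; case: w.
  move: E; rewrite (rev_anc nx) -rcons_cons -rcons_cat => /rcons_inj [E _].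
  exact: IH E.
Qed.

Lemma anc_suffix x z : z \in anc x -> exists t, anc x = t ++ anc z.
Proof.
move: {2}(size (anc x)) (leqnn (size (anc x))) => n.
elim: n x => [|n IH] x.
  by case: (anc x).
case: (eqVneq x 0) => [->|nx]; first by rewrite anc0.
rewrite (ancS nx) /= ltnS inE => Hs /orP [/eqP ->|Hz].
  by exists [::]; rewrite (ancS nx).
have [t ->] := IH _ Hs Hz.
by exists (x :: t).
Qed.

Lemma anc_mem_self x : x != 0 -> x \in anc x.
Proof. by move=> nx; rewrite (ancS nx) mem_head. Qed.

Lemma anc_antisym x y : x \in anc y -> y \in anc x -> x = y.
Proof.
move=> Hx Hy.
have [t1 E1] := anc_suffix Hx.
have [t2 E2] := anc_suffix Hy.
have : size (anc y) = size t1 + size (t2 ++ anc y) by rewrite {1}E1 -E2 size_cat.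
rewrite size_cat addnA -{1}(add0n (size (anc y))) => /eqP; rewrite eqn_add2r.
rewrite eq_sym addn_eq0 => /andP [].
case: t1 E1 => // E1 _ _; apply: anc_inj; by rewrite E1.
Qed.

Definition ins s x := insert_before [:: x] (par x) s.
Definition R x y := seqR slt (rev (anc x)) (rev (anc y)).

Definition closed (s : seq nat) := forall x, x \in s -> (par x == 0) || (par x \in s).

Definition Inv s := [/\ uniq s, 0 \notin s, closed s &
  forall x y, x \in s -> y \in s -> x != y -> (index x s < index y s) = R x y].

Lemma closed_anc s x z : closed s -> 0 \notin s -> x \in s -> z \in anc x -> z \in s.
Proof.
move=> cl s0.
move: {2}(size (anc x)) (leqnn (size (anc x))) => n.
elim: n x => [|n IH] x; first by case: (anc x).
have [->|nx] := eqVneq x 0; first by rewrite (negPf s0).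
rewrite (ancS nx) /= ltnS inE => Hs xs /orP [/eqP ->//|Hz].
have := cl _ xs; case/orP => [/eqP p0|ps].
  by move: Hz; rewrite p0 anc0.
exact: IH Hs ps Hz.
Qed.

Lemma mem_ins s x y : (y \in ins s x) = (y \in s) || (y == x).
Proof.
rewrite /ins /insert_before mem_cat /= inE.
rewrite -[in RHS](cat_take_drop (index (par x) s) s) mem_cat.
by case: (y \in take _ _); case: (y == x); case: (y \in drop _ _).
Qed.

Lemma shift_mono k a b :
  ((if a < k then a else a.+1) < (if b < k then b else b.+1)) = (a < b).
Proof.
case: (ltnP a k) => Ha; case: (ltnP b k) => Hb //.
- by rewrite ltnS (leq_trans Ha Hb) (ltnW (leq_trans Ha Hb)).
- apply/idP/idP => H.
    by apply: ltn_trans H.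
  by move: (leq_trans Hb (ltnW (leq_ltn_trans Ha H))); rewrite ltnn.
Qed.

Lemma index_ins s x y : x \notin s -> y \in s ->
  index y (ins s x) = if index y s < index (par x) s then index y s else (index y s).+1.
Proof.
move=> xs ys; rewrite /ins /insert_before index_cat.
have Hk : index (par x) s <= size s by rewrite index_size.
rewrite in_take //.
case: ifP => H.
  by rewrite -[in RHS](cat_take_drop (index (par x) s) s) index_cat in_take // H.
rewrite /= size_takel //.
have yx : (x == y) = false by apply/negbTE; apply: contra xs => /eqP ->.
rewrite yx.
rewrite -[in RHS](cat_take_drop (index (par x) s) s) index_cat in_take // H size_takel //.
by rewrite addnS.
Qed.

Lemma index_ins_new s x : x \notin s -> index x (ins s x) = index (par x) s.
Proof.
move=> xs; rewrite /ins /insert_before index_cat.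
have Hk : index (par x) s <= size s by rewrite index_size.
have -> : x \in take (index (par x) s) s = false.
  by apply/negbTE; apply: contra xs; apply: mem_take.
by rewrite size_takel //= eqxx addn0.
Qed.

Definition ok (M : seq nat) x := [/\ x \notin M, x != 0, (par x == 0) || (par x \in M) &
   forall a, a \in M -> par a = par x -> slt a x].

Lemma keyL s x y : Inv s -> ok s x -> y \in s ->
  R y x = (par x == 0) || ((y != par x) && R y (par x)).
Proof.
move=> [us s0 cl ord] [xs nx px sib] ys.
have ny : y != 0 by apply: contra s0 => /eqP <-.
rewrite /R (rev_anc nx).
set w := rev (anc (par x)); set u := rev (anc y).
case: (boolP (prefix w u)) => [/prefixP [t Eu]|npre].
- case: t Eu => [|a t] Eu.
  + rewrite cats0 in Eu.
    have yp : y = par x by apply: anc_inj; rewrite -(revK (anc y)) -/u Eu revK.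
    rewrite Eu -cats1 -{1}(cats0 w) seqR_cat /seqR /= yp eqxx /=.
    have : par x != 0 by rewrite -yp.
    by move/negbTE->.
  + rewrite Eu -cats1 seqR_cat /seqR /=.
    have ax : a != x.
      have az : a \in anc y by rewrite -mem_rev -/u Eu mem_cat mem_head orbT.
      apply: contra xs => /eqP <-; exact: closed_anc cl s0 ys az.
    rewrite (negPf ax) /=.
    have az : a \in anc y by rewrite -mem_rev -/u Eu mem_cat mem_head orbT.
    have as' : a \in s by exact: closed_anc cl s0 ys az.
    have Ea : anc a = a :: rev w by apply: (@prefix_split t y); rewrite -/u Eu.
    have na : a != 0 by apply: contra s0 => /eqP <-.
    have pa : par a = par x.
      apply: anc_inj; move: Ea; rewrite (ancS na) /w revK; by case.
    rewrite (sib a as' pa).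
    case: eqP => //= _.
    have -> : (y != par x).
      apply/eqP => yp; move: Eu; rewrite /u yp -/w => /eqP.
      by rewrite -{1}(cats0 w) eqseq_cat // => /andP [].
    by rewrite -{2}(cats0 w) strip_cat.
- rewrite -cats1 cats1 seqR_rcons //.
  have p0 : (par x == 0) = false.
    apply/negbTE; apply: contra npre => /eqP p0; by rewrite /w p0 anc0 prefix0s.
  rewrite p0 /=.
  have -> : (y != par x).
    by apply: contra npre => /eqP yp; rewrite /u yp prefix_refl.
  by [].
Qed.

Lemma Inv_ins s x : Inv s -> ok s x -> Inv (ins s x).
Proof.
move=> I Hok; have I' := I; case: I' => [us s0 cl ord].
have Hok' := Hok; case: Hok' => [xs nx px sib].
split.
- have P : perm_eq (ins s x) (x :: s).
    by rewrite /ins /insert_before perm_catCA /= cat_take_drop perm_refl.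
  by rewrite (perm_uniq P) /= us xs.
- by rewrite mem_ins negb_or s0 eq_sym nx.
- move=> z; rewrite !mem_ins => /orP [zs|/eqP ->].
    by case/orP: (cl _ zs) => ->; rewrite ?orbT.
  by case/orP: px => ->; rewrite ?orbT.
- have Lx : forall y, y \in s -> (index y (ins s x) < index x (ins s x)) = R y x.
    move=> y ys; rewrite (keyL I Hok ys).
    rewrite index_ins_new // index_ins //.
    case: (eqVneq (par x) 0) => [p0|pn] /=.
      have : index (par x) s = size s by apply: memNindex; rewrite p0.
      move=> ->; by rewrite index_mem ys /= index_mem.
    have ps : par x \in s by case/orP: px => //; rewrite (negPf pn).
    case: (eqVneq y (par x)) => [yp|ypn] /=.
      by rewrite yp ltnn /= ltnNge leqnSn.
    rewrite -(ord y (par x)) //.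
    case: ifP => // H; apply/negbTE; rewrite -leqNgt; apply: leqW.
    by rewrite leqNgt H.
  have Rdiff : forall y, y != x -> R y x = ~~ R x y.
    move=> y yx; rewrite /R seqR_anti //.
    apply: contra yx => /eqP E; apply/eqP; apply: anc_inj.
    by rewrite -(revK (anc y)) E revK.
  have idxinj : forall a b, a \in ins s x -> b \in ins s x -> a != b ->
      index a (ins s x) != index b (ins s x).
    move=> a b ai bi; apply: contra => /eqP E.
    by rewrite -(nth_index 0 ai) E nth_index.
  move=> y z; rewrite !mem_ins => /orP [ys|/eqP ->] /orP [zs|/eqP ->] yz.
  + rewrite index_ins // index_ins // -ord //.
    exact: shift_mono.
  + exact: Lx.
  + have zx : z != x by rewrite eq_sym.
    rewrite -[R x z]negbK -Rdiff // -Lx //.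
    rewrite -leqNgt [in RHS]leq_eqVlt.
    have -> : (index x (ins s x) == index z (ins s x)) = false.
      apply/negbTE; apply: idxinj; rewrite ?mem_ins ?zs ?eqxx ?orbT //.
    by [].
  + by rewrite eqxx in yz.
Qed.

Lemma mem_foldl L s y : (y \in foldl ins s L) = (y \in s ++ L).
Proof.
elim: L s => [|a L IH] s; first by rewrite cats0.
rewrite [foldl _ _ _]/= IH (mem_cat _ (ins s a)) mem_ins mem_cat inE.
by case: (y \in s); case: (y == a); case: (y \in L).
Qed.

Lemma ok_eq M M' x : M =i M' -> ok M x -> ok M' x.
Proof.
move=> E [h1 h2 h3 h4]; split => //.
- by rewrite -E.
- by rewrite -E.
- by move=> a; rewrite -E; apply: h4.
Qed.

Lemma Inv_foldl L s : Inv s -> (forall L1 x L2, L = L1 ++ x :: L2 -> ok (s ++ L1) x) ->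
  Inv (foldl ins s L).
Proof.
elim: L s => [|a L IH] s I H //=.
apply: IH.
  apply: Inv_ins => //; have := H [::] a L erefl; rewrite cats0 => Hok.
  exact: Hok.
move=> L1 x L2 E.
have := H (a :: L1) x L2; rewrite E => /(_ erefl).
apply: ok_eq => z; rewrite (mem_cat _ (ins s a)) mem_ins mem_cat inE.
by case: (z \in s); case: (z == a); case: (z \in L1).
Qed.


Lemma ok_of_pairwise (bf : rel nat) L :
  (forall a b, bf a b -> ~~ bf b a) -> pairwise bf L ->
  (forall x, x \in L -> [/\ x != 0, (par x == 0) || ((par x \in L) && bf (par x) x) &
       forall a, a \in L -> par a = par x -> bf a x -> slt a x]) ->
  forall L1 x L2, L = L1 ++ x :: L2 -> ok ([::] ++ L1) x.
Proof.
move=> asym pw H L1 x L2 E.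
have xL : x \in L by rewrite E mem_cat mem_head orbT.
have [nx hp hs] := H x xL.
have irr : forall a, bf a a = false.
  by move=> a; apply/negbTE/negP => h; move: (asym _ _ h); rewrite h.
move: pw; rewrite E pairwise_cat pairwise_cons => /and4P [/allrelP A _ /allP B _].
have A' : forall a, a \in L1 -> bf a x by move=> a aL; apply: A => //; exact: mem_head.
rewrite cat0s; split => //.
- by apply/negP => /A'; rewrite irr.
- case/orP: hp => [->//|/andP [pL bp]]; apply/orP; right.
  move: pL; rewrite E mem_cat inE => /orP [//|/orP [/eqP px|pL2]].
    by rewrite px irr in bp.
  by have := B _ pL2; move/asym; rewrite bp.
- move=> a aL1 pa; apply: hs.
    by rewrite E mem_cat aL1.
  by []. 
  exact: A'.
Qed.

End Abs.

Lemma allrel_r1 (r : rel nat) xs x : allrel r xs [:: x] = all (fun y => r y x) xs.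
Proof. by elim: xs => //= y t IH; rewrite -IH allrel_consl /= andbT. Qed.


Lemma pairwise_rev (r : rel nat) s : pairwise r (rev s) = pairwise (fun x y => r y x) s.
Proof.
elim: s => [|x s IH] //=.
by rewrite rev_cons -cats1 pairwise_cat IH /= andbT allrel_r1 all_rev andbC.
Qed.

Lemma head_filter_P (p : pred nat) s : has p s -> p (head 0 [seq x <- s | p x]).
Proof. by elim: s => //= a s IH; case: ifP => //= _ /IH. Qed.

Lemma head_filter_min (p : pred nat) s x :
  sorted leq s -> x \in s -> p x -> head 0 [seq y <- s | p y] <= x.
Proof.
elim: s => //= a s IH Hs; rewrite inE => /orP [/eqP ->|xs] px.
  by rewrite px.
case: ifP => pa /=.
  have := order_path_min leq_trans Hs => /allP /(_ x xs); by [].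
by apply: IH => //; apply: path_sorted Hs.
Qed.

Lemma index_drop_index (y : nat) s : index y (drop (index y s) s) = 0.
Proof. by elim: s => //= z s IH; case: ifP => //= H; rewrite H. Qed.
Lemma ins_cons_lem (x y : nat) xs s : x != y ->
  insert_before xs y (insert_before [:: x] y s) = insert_before (x :: xs) y s.
Proof.
move=> xy; rewrite /insert_before.
set k := index y s.
have Hk : k <= size s by rewrite index_size.
have yt : y \in take k s = false by rewrite in_take_leq // ltnn.
have -> : index y (take k s ++ [:: x] ++ drop k s) = k.+1.
  rewrite index_cat yt size_takel //= (negPf xy) index_drop_index.
  by rewrite addn1.
rewrite take_cat drop_cat size_takel // ltnNge leqnSn /= subSn // subnn /=.
by rewrite take0 drop0 -catA.
Qed.

Section Conc.
Variable T : ptab.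
Hypothesis V : valid_ptab T.

Local Notation n := (tn T).
Local Notation br := (black_row T).
Local Notation wc := (white_col T).

Lemma mem_labels k : (k \in labels T) = is_label T k.
Proof. by rewrite /labels mem_iota /is_label addnC addn1 ltnS. Qed.

Lemma row_label i : is_row T i -> (1 <= i) && (i <= n).
Proof. by case/andP. Qed.

Lemma col_label j : is_col T j -> (1 <= j) && (j <= n).
Proof. by case/andP. Qed.

Lemma row_not_col k : is_row T k -> is_col T k = false.
Proof. by rewrite /is_row /is_col => /andP [_ ->]; rewrite andbF. Qed.

Lemma col_br c : is_col T c -> [/\ is_row T (br c), Defs.one T (br c) c & br c < c].
Proof.
move=> Hc; case: V => _ /(_ c Hc) [i Hi] _.
have H : Defs.one T (br c) c.
  apply: (@head_filter_P (fun i => Defs.one T i c)); apply/hasP; exists i => //.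
  rewrite mem_labels; move: Hi; rewrite /Defs.one /is_cell => /andP [/and3P [/andP [] ]].
  by [].
split => //; move: H; rewrite /Defs.one /is_cell => /andP [/and3P []] //.
Qed.

Lemma br_min c i : Defs.one T i c -> br c <= i.
Proof.
move=> H; apply: (@head_filter_min (fun i => Defs.one T i c)) => //.
  exact: iota_sorted.
rewrite mem_labels; move: H; rewrite /Defs.one /is_cell => /andP [/and3P [/andP []]] //.
Qed.

Lemma rr_wc i : restricted_row T i -> [/\ is_col T (wc i), rzero T i (wc i) & i < wc i].
Proof.
case/andP => Hr Hh.
have H : rzero T i (wc i) by apply: (@head_filter_P (rzero T i)).
split => //; move: H; rewrite /rzero /Defs.zero /is_cell => /andP [/andP [/and3P []]] //.
Qed.

Lemma rr_row i : restricted_row T i -> is_row T i.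
Proof. by case/andP. Qed.

Lemma ur_row i : unrestricted_row T i -> is_row T i.
Proof. by case/andP. Qed.

Lemma le_cond j : is_col T j -> restricted_row T (br j) -> j < wc (br j).
Proof.
move=> Hj Hr; have [_ H1 _] := col_br Hj; have [Hc H2 _] := rr_wc Hr.
rewrite ltnNge leq_eqVlt; apply/negP => /orP [/eqP E|lt].
  move: H1 H2; rewrite /Defs.one /rzero /Defs.zero E => /andP [_ ->] /andP [/andP [_ ]] //.
case: V => _ _ /(_ (br j) (wc (br j))) HV.
move: H2; rewrite /rzero => /andP [Hz /hasP [i' _ /andP [lt' o']]].
apply: (HV Hz); split; first by exists i'; split => //; apply/ltP.
by exists j; split => //; apply/ltP.
Qed.

Lemma br_lt_rr i : restricted_row T i -> br (wc i) < i.
Proof.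
move=> Hr; have [_ H _] := rr_wc Hr.
move: H; rewrite /rzero => /andP [_ /hasP [i' _ /andP [lt' o']]].
exact: leq_ltn_trans (br_min o') lt'.
Qed.


Definition par x := if is_col T x then br x else if restricted_row T x then wc x else 0.
Definition hm x := if is_col T x then n + br x - x else if restricted_row T x then n + x - wc x else 0.

Lemma par_cases x : par x != 0 ->
  (is_col T x /\ par x = br x /\ is_row T (br x)) \/
  (is_col T x = false /\ restricted_row T x /\ par x = wc x /\ is_col T (wc x)).
Proof.
rewrite /par; case: ifP => Hc.
  by move=> _; left; have [? _ _] := col_br Hc.
case: ifP => Hr; last by rewrite eqxx.
by move=> _; right; have [? _ _] := rr_wc Hr.
Qed.

Lemma par_row_pos x : par x != 0 -> 0 < par x.
Proof. by rewrite lt0n. Qed.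

Lemma hm_par x : par x != 0 -> hm (par x) < hm x.
Proof.
move=> H; case: (par_cases H) => [[Hc [Ep Hr]]|[Hc [Hr [Ep Hw]]]].
- rewrite Ep /hm Hc (row_not_col Hr).
  have [_ _ lt] := col_br Hc.
  have /andP [r1 rn] := row_label Hr.
  have /andP [c1 cn] := col_label Hc.
  case: ifP => Hrr.
    have lt2 := le_cond Hc Hrr.
    have [Hw _ lt3] := rr_wc Hrr.
    have /andP [w1 wn] := col_label Hw.
    rewrite ltn_sub2lE; last by rewrite (leq_trans wn) // leq_addr.
    exact: lt2.
  rewrite subn_gt0 -addn1; exact: leq_add cn r1.
- rewrite Ep /hm Hw Hc Hr.
  have lt := br_lt_rr Hr.
  have /andP [w1 wn] := col_label Hw.
  have /andP [x1 _] := row_label (rr_row Hr).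
  rewrite ltn_sub2r //; last by rewrite ltn_add2l.
  rewrite -addn1; exact: leq_add wn x1.
Qed.

Lemma hm_le x : hm x <= n.
Proof.
rewrite /hm; case: ifP => Hc.
  have [_ _ lt] := col_br Hc; by rewrite leq_subLR addnC leq_add2r ltnW.
case: ifP => Hr //.
have [_ _ lt] := rr_wc Hr; by rewrite leq_subLR addnC leq_add2r ltnW.
Qed.

Fixpoint ancf f x : seq nat :=
  if x == 0 then [::] else x :: (if f is f'.+1 then ancf f' (par x) else [::]).

Definition anc x := ancf n x.

Lemma ancf_par0 f x : x != 0 -> par x = 0 -> ancf f x = [:: x].
Proof. by move=> nx p0; case: f => [|f] /=; rewrite (negPf nx) ?p0 //; case: f. Qed.

Lemma ancf_stable f : forall g x, hm x <= f -> hm x <= g -> ancf f x = ancf g x.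
Proof.
elim: f => [|f IH] g x Hf Hg.
- have [->|nx] := eqVneq x 0; first by case: g Hg.
  have [p0|pn] := eqVneq (par x) 0; first by rewrite !ancf_par0.
  by have := hm_par pn; rewrite leqn0 in Hf; rewrite (eqP Hf).
- have [->|nx] := eqVneq x 0; first by case: g Hg.
  have [p0|pn] := eqVneq (par x) 0; first by rewrite !ancf_par0.
  have lt := hm_par pn.
  case: g Hg => [|g] Hg; first by rewrite leqn0 in Hg; rewrite (eqP Hg) in lt.
  rewrite /= (negPf nx); congr (_ :: _); apply: IH.
    by rewrite -ltnS (leq_trans lt).
  by rewrite -ltnS (leq_trans lt).
Qed.

Lemma anc0 : anc 0 = [::].
Proof. by rewrite /anc; case: n. Qed.

Lemma ancS x : x != 0 -> anc x = x :: anc (par x).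
Proof.
move=> nx; have [p0|pn] := eqVneq (par x) 0.
  by rewrite /anc ancf_par0 // p0; case: n.
have lt := hm_par pn; have le := hm_le x.
rewrite /anc; case E: n => [|m]; first by rewrite E in le; move: (leq_trans lt le).
rewrite [ancf m.+1 x]/= (negPf nx); congr (_ :: _); apply: ancf_stable.
  by rewrite -ltnS -E (leq_trans lt).
by rewrite -E hm_le.
Qed.

Definition slt (a b : nat) := if is_col T a && is_col T b then b < a else a < b.

Lemma slt_tot a b : a != b -> slt a b = ~~ slt b a.
Proof.
move=> ab; rewrite /slt andbC; case: (_ && _); case: (ltngtP a b) => //.
- by move=> E; rewrite E eqxx in ab.
- by move=> E; rewrite E eqxx in ab.
Qed.


Definition cols := [seq j <- labels T | is_col T j].
Definition rs c := [seq i <- labels T | restricted_row T i && (wc i == c)].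
Definition s0 := [seq i <- labels T | unrestricted_row T i].
Definition blk c := c :: rs c.
Definition Lall := s0 ++ flatten [seq blk c | c <- rev cols].

Lemma label_pos k : is_label T k -> k != 0.
Proof. by case/andP; rewrite lt0n. Qed.

Lemma ur_par x : unrestricted_row T x -> par x = 0.
Proof.
move=> H; rewrite /par (row_not_col (ur_row H)).
by move: H; rewrite /unrestricted_row /restricted_row => /andP [-> /negbTE ->].
Qed.

Lemma ur_not_rr x : unrestricted_row T x -> restricted_row T x = false.
Proof. by rewrite /unrestricted_row /restricted_row => /andP [-> /negbTE ->]. Qed.

Lemma col_par x : is_col T x -> par x = br x.
Proof. by rewrite /par => ->. Qed.

Lemma rr_par x : restricted_row T x -> par x = wc x.
Proof. by move=> H; rewrite /par (row_not_col (rr_row H)) H. Qed.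

Lemma foldl_app L s : 0 \notin s -> all (fun x => (par x == 0) && (x != 0)) L ->
  foldl (ins par) s L = s ++ L.
Proof.
elim: L s => [|x L IH] s s0n /=; first by rewrite cats0.
case/andP => /andP [/eqP p0 nx] HL.
have -> : ins par s x = s ++ [:: x].
  rewrite /ins /insert_before p0 memNindex // take_size drop_size cats0 //.
rewrite IH; first by rewrite -catA.
  by rewrite mem_cat inE negb_or s0n eq_sym.
by [].
Qed.

Lemma foldl_multi xs y s : all (fun x => (par x == y) && (x != y)) xs ->
  foldl (ins par) s xs = insert_before xs y s.
Proof.
elim: xs s => [|x xs IH] s /=.
  by move=> _; rewrite /insert_before cat_take_drop.
case/andP => /andP [/eqP px xy] H.
by rewrite IH // /ins px ins_cons_lem.
Qed.

Lemma xi_foldl : xi T = foldl (ins par) [::] Lall.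
Proof.
rewrite /Lall foldl_cat (@foldl_app s0 [::]) //; last first.
  apply/allP => x; rewrite mem_filter => /andP [H Hl].
  by rewrite ur_par // eqxx label_pos // -mem_labels.
change (foldl (xi_step T) s0 (rev cols) = foldl (ins par) s0 (flatten [seq blk c | c <- rev cols])).
have : all (is_col T) (rev cols).
  by rewrite all_rev; apply/allP => x; rewrite mem_filter => /andP [].
elim: (rev cols) (s0) => [|c cs IH] s //=.
case/andP => Hc Hcs; rewrite foldl_cat IH //.
congr foldl; rewrite /blk /= /xi_step (foldl_multi (y := c)).
  by rewrite /ins col_par.
apply/allP => x; rewrite mem_filter => /andP [/andP [Hr /eqP Hw] _].
rewrite rr_par // Hw eqxx /=.
by apply: contraTneq Hc => <-; rewrite row_not_col // rr_row.
Qed.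

Lemma ur_label x : unrestricted_row T x -> is_label T x.
Proof. by case/andP => /andP []. Qed.
Lemma col_lab x : is_col T x -> is_label T x.
Proof. by case/andP. Qed.
Lemma rr_label x : restricted_row T x -> is_label T x.
Proof. by case/andP => /andP []. Qed.

Lemma row_cases x : is_row T x -> unrestricted_row T x || restricted_row T x.
Proof. by rewrite /unrestricted_row /restricted_row => ->; case: has. Qed.

Lemma mem_Lall x : (x \in Lall) = [|| unrestricted_row T x, is_col T x | restricted_row T x].
Proof.
rewrite /Lall mem_cat mem_filter mem_labels.
apply/idP/idP.
- case/orP => [/andP [-> _]//|/flatten_mapP [c]].
  rewrite mem_rev mem_filter => /andP [Hc _]; rewrite /blk inE => /orP [/eqP ->|].
    by rewrite Hc orbT.
  by rewrite mem_filter => /andP [/andP [-> _] _]; rewrite !orbT.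
- case/or3P => [H|H|H].
    by rewrite H ur_label.
  apply/orP; right; apply/flatten_mapP; exists x.
    by rewrite mem_rev mem_filter H mem_labels col_lab.
  exact: mem_head.
  apply/orP; right; apply/flatten_mapP; exists (wc x).
    have [Hw _ _] := rr_wc H.
    by rewrite mem_rev mem_filter Hw mem_labels col_lab.
  by rewrite /blk inE mem_filter H eqxx mem_labels rr_label // orbT.
Qed.

Definition k1 x := if is_col T x then n.+1 - x else if restricted_row T x then n.+1 - wc x else 0.
Definition k2 x := if is_col T x then 0 else x.
Definition bf a b := (k1 a < k1 b) || ((k1 a == k1 b) && (k2 a < k2 b)).

Lemma bf_asym a b : bf a b -> ~~ bf b a.
Proof.
move=> Hab; apply/negP => Hba; move: Hab Hba; rewrite /bf.
case: (ltngtP (k1 a) (k1 b)) => H /=.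
- by [].
- by [].
- move=> h1 h2; by move: (ltn_trans h1 h2); rewrite ltnn.
Qed.

Lemma k1_col x : is_col T x -> 0 < k1 x.
Proof. by move=> H; rewrite /k1 H subn_gt0 ltnS; case/andP: (col_lab H). Qed.

Lemma rr_notcol x : restricted_row T x -> is_col T x = false.
Proof. by move/rr_row/row_not_col. Qed.

Lemma k1_rr x : restricted_row T x -> k1 x = n.+1 - wc x.
Proof. by move=> H; rewrite /k1 rr_notcol // H. Qed.

Lemma k1_ur x : unrestricted_row T x -> k1 x = 0.
Proof. by move=> H; rewrite /k1 (row_not_col (ur_row H)) ur_not_rr. Qed.

Lemma k1_rr_pos x : restricted_row T x -> 0 < k1 x.
Proof.
move=> H; rewrite k1_rr // subn_gt0 ltnS.
by have [Hw _ _] := rr_wc H; case/andP: (col_lab Hw).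
Qed.

Lemma pairwise_blocks cs : all (is_col T) cs -> pairwise (fun a b => b < a) cs ->
  pairwise bf (flatten [seq blk c | c <- cs]).
Proof.
elim: cs => [|c cs IH] // /andP [Hc Hcs]; rewrite pairwise_cons => /andP [Hall Hpw].
have -> : flatten [seq blk c | c <- c :: cs] = blk c ++ flatten [seq blk c | c <- cs] by [].
rewrite pairwise_cat IH // andbT; apply/andP; split.
- apply/allrelP => y z; rewrite /blk inE => Hy /flatten_mapP [c' c'cs Hz].
  have ltc : c' < c by move/allP: Hall => /(_ c' c'cs).
  have Hc' : is_col T c' by move/allP: Hcs => /(_ c' c'cs).
  have k1y : k1 y = n.+1 - c.
    case/orP: Hy => [/eqP ->|]; first by rewrite /k1 Hc.
    by rewrite mem_filter => /andP [/andP [Hr /eqP <-] _]; rewrite k1_rr.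
  have k1z : k1 z = n.+1 - c'.
    move: Hz; rewrite /blk inE => /orP [/eqP ->|]; first by rewrite /k1 Hc'.
    by rewrite mem_filter => /andP [/andP [Hr /eqP <-] _]; rewrite k1_rr.
  rewrite /bf k1y k1z ltn_sub2l //.
  by rewrite ltnS; case/andP: (col_lab Hc') => _ ->.
- rewrite /blk pairwise_cons; apply/andP; split.
    apply/allP => x; rewrite mem_filter => /andP [/andP [Hr /eqP Hw] Hl].
    rewrite /bf (k1_rr Hr) Hw /k1 Hc ltnn eqxx /= /k2 Hc (rr_notcol Hr).
    by case/andP: (rr_label Hr).
  apply: (@sub_in_pairwise _ (fun x => restricted_row T x && (wc x == c)) ltn).
  + move=> a b /andP [Ha /eqP Ea] /andP [Hb /eqP Eb] lt.
    by rewrite /bf !k1_rr // Ea Eb ltnn eqxx /= /k2 !rr_notcol.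
  + by apply/allP => x; rewrite mem_filter => /andP [].
  + apply: pairwise_filter; rewrite -sorted_pairwise; first exact: iota_ltn_sorted.
    exact: ltn_trans.
Qed.

Lemma pairwise_Lall : pairwise bf Lall.
Proof.
rewrite /Lall pairwise_cat; apply/and3P; split.
- apply/allrelP => a b; rewrite mem_filter => /andP [Ha _] /flatten_mapP [c Hc Hb].
  rewrite /bf k1_ur //; move: Hc; rewrite mem_rev mem_filter => /andP [Hc _].
  move: Hb; rewrite /blk inE => /orP [/eqP ->|]; first by rewrite k1_col.
  by rewrite mem_filter => /andP [/andP [Hr _] _]; rewrite k1_rr_pos.
- apply: (@sub_in_pairwise _ (unrestricted_row T) ltn).
  + move=> a b Ha Hb lt; by rewrite /bf !k1_ur // ltnn eqxx /= /k2 !row_not_col // ur_row.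
  + by apply/allP => x; rewrite mem_filter => /andP [].
  + apply: pairwise_filter; rewrite -sorted_pairwise; first exact: iota_ltn_sorted.
    exact: ltn_trans.
- apply: pairwise_blocks.
    by rewrite all_rev; apply/allP => x; rewrite mem_filter => /andP [].
  rewrite pairwise_rev -sorted_pairwise; last exact: ltn_trans.
  apply: sorted_filter; first exact: ltn_trans.
  exact: iota_ltn_sorted.
Qed.


Lemma col_parnz x : is_col T x -> par x != 0.
Proof. move=> H; rewrite col_par //; have [Hr _ _] := col_br H; exact: label_pos (proj1 (andP Hr)). Qed.

Lemma rr_parnz x : restricted_row T x -> par x != 0.
Proof. move=> H; rewrite rr_par //; have [Hc _ _] := rr_wc H; exact: label_pos (col_lab Hc). Qed.

Lemma row_col_excl k : is_row T k -> is_col T k -> False.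
Proof. by move=> /row_not_col ->. Qed.

Lemma row_in_Lall k : is_row T k -> k \in Lall.
Proof. by move=> H; rewrite mem_Lall; case/orP: (row_cases H) => ->; rewrite ?orbT. Qed.

Lemma col_in_Lall k : is_col T k -> k \in Lall.
Proof. by move=> H; rewrite mem_Lall H orbT. Qed.

Lemma elem_ok x : x \in Lall -> [/\ x != 0, (par x == 0) || ((par x \in Lall) && bf (par x) x) &
       forall a, a \in Lall -> par a = par x -> bf a x -> slt a x].
Proof.
rewrite mem_Lall => /or3P [Hx|Hx|Hx].
- split; first exact: label_pos (ur_label Hx).
    by rewrite ur_par.
  move=> a; rewrite mem_Lall (ur_par Hx) => /or3P [Ha|Ha|Ha] pa.
  + rewrite /bf (k1_ur Hx) (k1_ur Ha) ltnn eqxx /= /k2 (row_not_col (ur_row Hx)).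
    by rewrite (row_not_col (ur_row Ha)) /slt (row_not_col (ur_row Ha)).
  + by move: (col_parnz Ha); rewrite pa eqxx.
  + by move: (rr_parnz Ha); rewrite pa eqxx.
- have [Hr Ho Hlt] := col_br Hx.
  split; first exact: label_pos (col_lab Hx).
    apply/orP; right; rewrite col_par // row_in_Lall //=.
    case/orP: (row_cases Hr) => Hp.
      by rewrite /bf k1_ur // k1_col.
    rewrite /bf k1_rr // /k1 Hx ltn_sub2l //.
      by rewrite ltnS; case/andP: (col_lab Hx).
    exact: le_cond.
  move=> a _ pa; case: (par_cases (col_parnz Hx)) => [[_ [_ _]]|[Hxc _]]; last by rewrite Hx in Hxc.
  case: (par_cases (x := a)); first by rewrite pa col_parnz.
    move=> [Ha _]; rewrite /bf /k1 Ha Hx /k2 Ha Hx ltnn andbF orbF.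
    rewrite ltn_sub2lE; last by apply: leqW; case/andP: (col_lab Ha).
    by rewrite /slt Ha Hx.
  move=> [_ [_ [Ep Hw]]]; exfalso.
  by move: pa; rewrite Ep col_par // => E; rewrite E in Hw; apply: (row_col_excl Hr Hw).
- have [Hw Hz Hlt] := rr_wc Hx.
  split; first exact: label_pos (rr_label Hx).
    apply/orP; right; rewrite rr_par // col_in_Lall //=.
    rewrite /bf (k1_rr Hx) /k1 Hw eqxx ltnn /= /k2 Hw (rr_notcol Hx).
    by case/andP: (rr_label Hx).
  move=> a _ pa; case: (par_cases (x := a)); first by rewrite pa rr_parnz.
    move=> [Ha [Ep Hr]]; exfalso.
    by move: pa; rewrite Ep rr_par // => E; rewrite E in Hr; apply: (row_col_excl Hr Hw).
  move=> [Hac [Har [Ep _]]].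
  move: pa; rewrite Ep rr_par // => E.
  rewrite /bf !k1_rr // E ltnn eqxx /= /k2 Hac rr_notcol // => H.
  by rewrite /slt Hac.
Qed.

Lemma Inv_xi : Inv par anc slt (xi T).
Proof.
rewrite xi_foldl; apply: (Inv_foldl anc0 ancS slt_tot).
  by split.
move=> L1 x L2 E.
exact: (ok_of_pairwise bf_asym pairwise_Lall elem_ok E).
Qed.

Lemma hm_pos x : par x != 0 -> 0 < hm x.
Proof. by move/hm_par => H; apply: leq_ltn_trans H. Qed.

Lemma dot_parnz k : is_dot_label T k -> par k != 0.
Proof. by case/orP => [/col_parnz|/rr_parnz]. Qed.

Lemma anc_ur r : unrestricted_row T r -> anc r = [:: r].
Proof. by move=> H; rewrite ancS ?label_pos ?ur_label // ur_par // anc0. Qed.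

Lemma apath_aux_anc f : forall k, is_dot_label T k -> hm k <= f ->
  exists r, unrestricted_row T r /\ anc k = rcons (apath_aux T f k) r.
Proof.
elim: f => [|f IH] k Dk Hf.
  by move: (hm_pos (dot_parnz Dk)); rewrite leqn0 in Hf; rewrite (eqP Hf).
have lt := hm_par (dot_parnz Dk).
have Hf' : hm (par k) <= f by rewrite -ltnS (leq_trans lt).
rewrite /= /next_dot (ancS (label_pos _)); last first.
  by case/orP: Dk => [/col_lab|/rr_label].
case: ifP => Hc.
  rewrite -(col_par Hc); case: ifP => Hr.
    have Dp : is_dot_label T (par k) by rewrite /is_dot_label Hr orbT.
    have [r [Hr' E]] := IH (par k) Dp Hf'.
    by exists r; split => //; rewrite E.
  have [Hrow _ _] := col_br Hc.
  have Hu : unrestricted_row T (par k).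
    by move: (row_cases Hrow); rewrite -(col_par Hc) Hr orbF.
  by exists (par k); split => //; rewrite anc_ur.
have Hr : restricted_row T k by case/orP: Dk => //; rewrite Hc.
rewrite -(rr_par Hr).
have [Hw _ _] := rr_wc Hr.
have Dp : is_dot_label T (par k) by rewrite /is_dot_label (rr_par Hr) Hw.
have [r [Hr' E]] := IH (par k) Dp Hf'.
by exists r; split => //; rewrite E.
Qed.

Lemma apath_anc k : is_dot_label T k ->
  exists r, unrestricted_row T r /\ anc k = rcons (apath T k) r.
Proof. by move=> Dk; apply: apath_aux_anc => //; exact: hm_le. Qed.

Lemma apath_head k : apath T k = k :: behead (apath T k).
Proof. by rewrite /apath; case: (tn T). Qed.

Lemma dot_not_ur k r : is_dot_label T k -> unrestricted_row T r -> k != r.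
Proof.
move=> Dk Hr; apply/eqP => E; subst k; case/orP: Dk => H.
  by move: H; rewrite row_not_col // ur_row.
by rewrite ur_not_rr in H.
Qed.

Lemma anc_nz x : x != 0 -> anc x != [::].
Proof. by move=> nx; rewrite ancS. Qed.

Lemma sib_cmp a b : a != b -> par a = par b -> par a != 0 ->
  slt a b = ~~ ((((dot_cell T b).1 < (dot_cell T a).1) ||
     (((dot_cell T a).1 == (dot_cell T b).1) && ((dot_cell T a).2 < (dot_cell T b).2)))).
Proof.
move=> ab pab pn.
have pn' : par b != 0 by rewrite -pab.
case: (par_cases pn) => [[Ha [Ea Hra]]|[Ha [Hra [Ea Hwa]]]];
  case: (par_cases pn') => [[Hb [Eb Hrb]]|[Hb [Hrb [Eb Hwb]]]].
- rewrite /slt /dot_cell Ha Hb /= -Ea -Eb pab ltnn eqxx /=.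
  by case: (ltngtP a b) => // E; rewrite E eqxx in ab.
- exfalso; move: pab; rewrite Ea Eb => E; rewrite E in Hra; exact: row_col_excl Hra Hwb.
- exfalso; move: pab; rewrite Ea Eb => E; rewrite -E in Hrb; exact: row_col_excl Hrb Hwa.
- rewrite /slt /dot_cell Ha Hb /= -Ea -Eb pab ltnn andbF orbF.
  by case: (ltngtP a b) => // E; rewrite E eqxx in ab.
Qed.

Lemma link i j : is_dot_label T i -> is_dot_label T j -> i != j ->
  R anc slt i j = path_lt T (apath T i) (apath T j) || contained (apath T j) (apath T i).
Proof.
move=> Di Dj ij.
have [ri [Hri Ei]] := apath_anc Di.
have [rj [Hrj Ej]] := apath_anc Dj.
have ni : i != 0 by apply: label_pos; case/orP: Di => [/col_lab|/rr_label].
have nj : j != 0 by apply: label_pos; case/orP: Dj => [/col_lab|/rr_label].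
have cont : forall k l, is_dot_label T k -> is_dot_label T l ->
    contained (apath T k) (apath T l) = (k \in anc l).
  move=> k l Dk Dl; rewrite /contained apath_head /=.
  have [rl [Hrl El]] := apath_anc Dl.
  by rewrite El mem_rcons inE (negPf (dot_not_ur Dk Hrl)).
rewrite /path_lt (cont i j) // (cont j i) //.

have ii : i \in anc i by rewrite ancS // mem_head.
have jj : j \in anc j by rewrite ancS // mem_head.
rewrite /R.
set U := rev (anc i); set W := rev (anc j).
have [w [U' [V' [EU EV ES Hd]]]] := strip_spec U W.
rewrite /seqR ES.
case: U' EU ES Hd => [|a U''] EU ES Hd.
  have ij' : i \in anc j.
    have : i \in U by rewrite mem_rev.
    by rewrite EU cats0 => Hw; rewrite -mem_rev -/W EV mem_cat Hw.
  rewrite ij' /=.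
  apply/esym/negbTE; apply/negP => ji.
  by move: ij; rewrite (anc_antisym anc0 ancS ij' ji) eqxx.
case: V' EV ES Hd => [|b V''] EV ES Hd.
  have ji : j \in anc i.
    have : j \in W by rewrite mem_rev.
    by rewrite EV cats0 => Hw; rewrite -mem_rev -/U EU mem_cat Hw.
  by rewrite ji orbT.
have nij : i \in anc j = false.
  apply/negP => H; have [t Et] := anc_suffix anc0 ancS H.
  move: EV; rewrite /W Et rev_cat -/U EU -catA => E.
  have := congr1 (drop (size w)) E; rewrite !drop_size_cat //= => -[Eb _].
  by rewrite Eb eqxx in Hd.
have nji : j \in anc i = false.
  apply/negP => H; have [t Et] := anc_suffix anc0 ancS H.
  move: EU; rewrite /U Et rev_cat -/W EV -catA => E.
  have := congr1 (drop (size w)) E; rewrite !drop_size_cat //= => -[Eb _].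
  by rewrite Eb eqxx in Hd.
rewrite nij nji /= orbF.
have Ua := prefix_split anc0 ancS EU.
have Wb := prefix_split anc0 ancS EV.
have na : a != 0 by apply/eqP => a0; move: Ua; rewrite a0 anc0.
have nb : b != 0 by apply/eqP => b0; move: Wb; rewrite b0 anc0.
have pa : anc (par a) = rev w by move: Ua; rewrite ancS // => -[].
have pb : anc (par b) = rev w by move: Wb; rewrite ancS // => -[].
have Epar : par a = par b by apply: (anc_inj anc0 ancS); rewrite pa pb.
have hU : U = ri :: rev (apath T i) by rewrite /U Ei rev_rcons.
have hW : W = rj :: rev (apath T j) by rewrite /W Ej rev_rcons.
case: w EU EV Ua Wb pa pb => [|r w'] EU EV Ua Wb pa pb.
- move: EU EV; rewrite hU hW /= => -[Eai EUi] [Ebj EVj].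
  have last_col : forall k rk q, is_dot_label T k -> unrestricted_row T rk ->
      anc k = rcons (apath T k) rk -> rev (apath T k) = q ->
      exists ck qk, [/\ q = ck :: qk, is_col T ck & br ck = rk].
    move=> k rk q Dk Hrk Ek Eq.
    case: q Eq => [|ck qk] Eq.
      by move: (congr1 size Eq); rewrite size_rev apath_head.
    exists ck, qk.
    have E1 : rev (anc k) = [:: rk] ++ ck :: qk by rewrite Ek rev_rcons Eq.
    have Ac := prefix_split anc0 ancS E1.
    have nck : ck != 0 by apply/eqP => c0; move: Ac; rewrite c0 anc0.
    have Epc : par ck = rk.
      apply: (anc_inj anc0 ancS); rewrite (anc_ur Hrk); move: Ac; rewrite (ancS nck) => -[] ->; by [].
    have Epcn : par ck != 0 by rewrite Epc label_pos // ur_label.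
    case: (par_cases Epcn) => [[Hc [Ec _]]|[_ [_ [Ec Hw]]]].
      by split => //; rewrite -Ec.
    exfalso; move: Hw; rewrite -Ec Epc => Hw; exact: (row_col_excl (ur_row Hrk) Hw).
  have [ci [qi [Eqi Hci Bci]]] := last_col i ri _ Di Hri Ei EUi.
  have [cj [qj [Eqj Hcj Bcj]]] := last_col j rj _ Dj Hrj Ej EVj.
  have rij : ri != rj by rewrite Eai Ebj.
  have cij : ci != cj by apply: contraNneq rij => E; rewrite -Bci -Bcj E.
  rewrite /path_gt EUi EVj Eqi Eqj /= (negPf cij) /= /dot_cell Hci Hcj /= Bci Bcj.
  rewrite -Eai -Ebj /slt (row_not_col (ur_row Hri)) /= (negPf rij) /= orbF.
  by case: (ltngtP ri rj) => // E; rewrite E eqxx in rij.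
- move: EU EV; rewrite hU hW /= => -[Eri EUi] [Erj EVj].
  have pn : par a != 0.
    by apply/eqP => p0; move: pa; rewrite p0 anc0 rev_cons; case: (rev w').
  rewrite /path_gt EUi EVj strip_cat /= (negPf Hd) /=.
  exact: sib_cmp.

Qed.
End Conc.

Theorem lemma2p5 (T : ptab) (i j : nat) :
  valid_ptab T -> is_dot_label T i -> is_dot_label T j -> i <> j ->
  (index i (xi T) < index j (xi T) <->
   path_lt T (apath T i) (apath T j) \/ contained (apath T j) (apath T i)).
Proof.
move=> V Di Dj ij.
have [_ _ _ ord] := Inv_xi V.
have mem : forall k, is_dot_label T k -> k \in xi T.
  move=> k Dk; rewrite xi_foldl mem_foldl /= mem_Lall.
  by case/orP: Dk => ->; rewrite ?orbT.
have ij' : i != j by apply/eqP.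
rewrite (ord i j) ?mem // (link V) //.
by split => /orP.
Qed.
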